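(* Let $G$ be a connected chordal graph with at least two vertices. A vertex $v\in V(G)$ is an $\mathcal{F}$-branch leaf of some perfect elimination ordering of $G$ if and only if the induced subgraph $G[N_G(v)]$ has a dominating clique.
   Context: Graphs are finite, simple, undirected; $N_G(v)$ is the open neighborhood of $v$. A graph is chordal if it has no induced cycle of length at least 4. A clique $C$ of a graph $H$ is dominating if every vertex of $H$ is in $C$ or has a neighbor in $C$. A vertex ordering $\sigma$ of $G$ (a bijection $\{1,\dots,n\}\to V(G)$, with $u\prec_\sigma w$ meaning $u$ comes before $w$) is a perfect elimination ordering (PEO) if for every vertex $v$ the neighbors of $v$ that precede $v$ in $\sigma$ form a clique. For an ordering $\sigma$ of a connected graph in which every vertex other than $\sigma(1)$ has a neighbor to its left (as is the case for PEOs of connected chordal graphs), the $\mathcal{F}$-tree of $\sigma$ is the spanning tree containing, for each $v\neq\sigma(1)$, the edge from $v$ to its leftmost neighbor in $\sigma$. A vertex $v\neq\sigma(1)$ that is a leaf of the $\mathcal{F}$-tree is an $\mathcal{F}$-branch leaf of $\sigma$. *)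

(* Defs.v *)
From mathcomp Require Import all_boot.
Set Implicit Arguments. Unset Strict Implicit. Unset Printing Implicit Defensive.

Section Graphs.
Variables (T : finType) (e : rel T).

Definition simple_graph := symmetric e /\ irreflexive e.

Definition connected_graph := forall x y : T, connect e x y.

(* induced cycle of length k >= 4: an injective cyclic labelling f : 'I_k -> T
   such that f i, f j are adjacent exactly when i, j are cyclically consecutive *)
Definition induced_cycle (k : nat) (f : 'I_k -> T) :=
  4 <= k /\ injective f /\
  forall i j : 'I_k, e (f i) (f j) = ((i.+1 %% k == j) || (j.+1 %% k == i)).

Definition chordal := forall (k : nat) (f : 'I_k -> T), ~ induced_cycle f.

Definition nbhd (v : T) : {set T} := [set u | e v u].

Definition is_clique (C : {set T}) :=
  forall x y, x \in C -> y \in C -> x != y -> e x y.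

Definition dominating_clique_of (S C : {set T}) :=
  C \subset S /\ is_clique C /\
  forall x, x \in S -> x \in C \/ exists2 y, y \in C & e x y.

(* A vertex ordering is a duplicate-free sequence listing every vertex;
   u precedes w iff index u s < index w s; sigma(1) is the element of index 0. *)
Definition vertex_ordering (s : seq T) := uniq s /\ forall x, x \in s.

Definition prec (s : seq T) (u w : T) := index u s < index w s.

Definition PEO (s : seq T) :=
  vertex_ordering s /\
  forall v u w, e u v -> e w v -> prec s u v -> prec s w v -> u != w -> e u w.

Definition leftmost_nbr (s : seq T) (u w : T) :=
  e u w /\ forall x, e u x -> index w s <= index x s.

Definition Ftree_edge (s : seq T) (u w : T) :=
  (index u s != 0 /\ leftmost_nbr s u w) \/ (index w s != 0 /\ leftmost_nbr s w u).

Definition Fbranch_leaf (s : seq T) (v : T) :=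
  index v s != 0 /\
  exists w, Ftree_edge s v w /\ forall w', Ftree_edge s v w' -> w' = w.

End Graphs.

(* Main.v *)
Require Import Defs.
From mathcomp Require Import all_boot zify.
From Stdlib Require Import Classical.
Set Implicit Arguments. Unset Strict Implicit. Unset Printing Implicit Defensive.

Section Ch.
Variables (T : finType) (e : rel T).
Hypotheses (esym : symmetric e) (eirr : irreflexive e) (ech : chordal e).

Lemma modS_ord (i n : nat) : i < n.+1 -> i.+1 %% n.+1 = if i == n then 0 else i.+1.
Proof.
move=> H; case: eqP => [->|Hn]; first by rewrite modnn.
rewrite modn_small //; lia.
Qed.

Lemma cycle_from (z : T) (q : seq T) :
  3 <= size q -> uniq (z :: q) ->
  (forall s t, s < t < size q -> e (nth z q s) (nth z q t) = (t == s.+1)) ->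
  (forall t, t < size q -> e z (nth z q t) = (t == 0) || (t == (size q).-1)) ->
  False.
Proof.
move=> H3 Hu Hqq Hzq.
apply: (@ech (size (z :: q)) (fun i => nth z (z :: q) i)).
split; first by rewrite /=; lia.
split.
  move=> i j /eqP; rewrite nth_uniq //; first by move/eqP/val_inj.
have Hqq' : forall s t, s < size q -> t < size q -> e (nth z q s) (nth z q t) = (t == s.+1) || (s == t.+1).
  move=> s t Hs Ht; case: (ltngtP s t) => Hst.
  - rewrite Hqq; last by lia. lia.
  - rewrite esym Hqq; last by lia. lia.
  - by rewrite Hst eirr; lia.
case=> [[|s] Hi]; case=> [[|t] Hj] /=; rewrite /= in Hi Hj.
- by rewrite eirr !modS_ord //; case: ifPn => /eqP ?; lia.
- rewrite Hzq; last by lia. rewrite !modS_ord //. case: ifPn => /eqP ?; case: ifPn => /eqP ?; lia.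
- rewrite esym. rewrite Hzq; last by lia. rewrite !modS_ord //.  case: ifPn => /eqP ?; case: ifPn => /eqP ?; lia.
- rewrite Hqq'; try lia. rewrite !modS_ord //. case: ifPn => /eqP ?; case: ifPn => /eqP ?; lia.
Qed.

Lemma td_size a b (q : seq T) : a <= b <= size q -> size (take a q ++ drop b q) = a + (size q - b).
Proof. move=> H; rewrite size_cat size_takel ?size_drop //; lia. Qed.

Lemma td_nth a b (q : seq T) k x0 : a <= b <= size q ->
  nth x0 (take a q ++ drop b q) k = nth x0 q (if k < a then k else k - a + b).
Proof.
move=> H; rewrite nth_cat size_takel; last by lia.
case: ifP => Hk; first by rewrite nth_take.
rewrite nth_drop; congr nth; lia.
Qed.

Definition good z (q : seq T) := [/\ 3 <= size q,
  (forall i, i.+1 < size q -> e (nth z q i) (nth z q i.+1)),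
  e z (nth z q 0) && e z (nth z q (size q).-1),
  (nth z q 0 != nth z q (size q).-1) && ~~ e (nth z q 0) (nth z q (size q).-1) &
  (forall i, 0 < i < (size q).-1 -> ~~ e z (nth z q i) && (nth z q i != z))].

Lemma good_short z q a b : good z q -> 1 <= a <= b -> b < size q ->
  e (nth z q a.-1) (nth z q b) -> 3 <= a + (size q - b) ->
  good z (take a q ++ drop b q).
Proof.
case=> H3 Hw Hz Hne Hint Hab Hb Hj Hs.
have Hab' : a <= b <= size q by lia.
split; rewrite ?td_size ?td_nth //.
- move=> i Hi; rewrite !td_nth //.
  case: (ltnP i.+1 a) => H1.
    have H1' : i < a by lia.
    rewrite H1'; apply: Hw; lia.
  case: (ltnP i a) => H2.
    have -> : i = a.-1 by lia.
    by have -> : a.-1.+1 - a + b = b by lia.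
  have -> : i.+1 - a + b = (i - a + b).+1 by lia.
  apply: Hw; lia.
- rewrite ifT; last by lia.
  have -> : (a + (size q - b)).-1 - a + b = (size q).-1 by lia.
  by rewrite ifF //; lia.
- rewrite ifT; last by lia.
  have -> : (a + (size q - b)).-1 - a + b = (size q).-1 by lia.
  by rewrite ifF //; lia.
- move=> i Hi; rewrite td_nth //; apply: Hint.
  case: ifPn => H; lia.
Qed.

Lemma noshort n : forall z q, size q <= n -> good z q -> False.
Proof.
elim: n => [|n IH] z q Hn Hg.
  by case: Hg => H3; lia.
case: (Hg) => H3 Hw /andP[Hz0 Hz1] /andP[Hne Hnc] Hint.
set m := size q in Hn H3 Hw Hz0 Hz1 Hne Hnc Hint.
have Hm : m = size q by [].
case: (classic (exists i j, [/\ i.+1 < j, j < m, e (nth z q i) (nth z q j) & ~~ ((i == 0) && (j == m.-1))])).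
  move=> [i [j [H1 H2 H3' H4]]].
  apply: (IH z (take i.+1 q ++ drop j q)); last first.
    apply: good_short => //; lia.
  rewrite td_size; lia.
move=> Hnochord.
case: (classic (exists i j, [/\ 0 < i, i < j, j < m.-1 & nth z q i = nth z q j])).
  move=> [i [j [H1 H2 H3' H4]]].
  apply: (IH z (take i q ++ drop j q)); last first.
    apply: good_short => //; try lia.
    rewrite -H4 -{2}(prednK H1); apply: Hw; lia.
  rewrite td_size; lia.
move=> Hnorep.
have Hzn : forall t, t < m -> nth z q t != z.
  move=> t Ht; case: (ltnP 0 t) => H0; last first.
    have -> : t = 0 by lia.
    by apply/eqP => Heq; move: Hz0; rewrite Heq eirr.
  case: (ltnP t m.-1) => H1; first by case/andP: (Hint t (ltac:(lia))).
  have -> : t = m.-1 by lia.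
  by apply/eqP => Heq; move: Hz1; rewrite Heq eirr.
apply: (@cycle_from z q) => //; rewrite -/m.
- rewrite cons_uniq; apply/andP; split.
    apply/(nthP z) => [[t Ht Heq]]; move: (Hzn t Ht); by rewrite Heq eqxx.
  apply/(uniqP z) => s t; rewrite !inE => Hs Ht Heq; rewrite -/m in Hs Ht.
  apply/eqP; apply/negPn/negP => Hst.
  wlog Hlt : s t Hs Ht Heq Hst / s < t.
    move=> W; case: (ltngtP s t) => H.
    - exact: (W s t).
    - by apply: (W t s) => //; rewrite eq_sym.
    - by move/eqP: Hst.
  case: (ltnP 0 s) => Hs0.
    case: (ltnP t m.-1) => Ht1.
      by apply: Hnorep; exists s, t; split.
    have Ht' : t = m.-1 by lia.
    by case/andP: (Hint s (ltac:(lia))); rewrite Heq Ht' Hz1.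
  have Hs' : s = 0 by lia.
  case: (ltnP t m.-1) => Ht1.
    by case/andP: (Hint t (ltac:(lia))); rewrite -Heq Hs' Hz0.
  have Ht' : t = m.-1 by lia.
  by move: Hne; rewrite -Hs' -Ht' Heq eqxx.
- move=> s t /andP[Hst Ht].
  case: (eqVneq t s.+1) => [->|Hn1]; first by rewrite Hw //; lia.
  apply/negbTE/negP => Hc.
  case: (eqVneq s 0) => [Hs0|Hs0].
    case: (eqVneq t m.-1) => [Ht1|Ht1].
      by move: Hnc; rewrite -Hs0 -Ht1 Hc.
    apply: Hnochord; exists s, t; split => //; try lia.
  apply: Hnochord; exists s, t; split => //; try lia.
- move=> t Ht.
  case: (eqVneq t 0) => [->|H0]; first by rewrite Hz0.
  case: (eqVneq t m.-1) => [->|H1]; first by rewrite Hz1 orbT.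
  by case/andP: (Hint t (ltac:(lia))) => /negbTE ->.
Qed.


Lemma no_detour z u w p : e z u -> e z w -> u != w -> ~~ e u w ->
  path e u (rcons p w) -> all (fun x => (x != z) && ~~ e z x) p -> False.
Proof.
move=> Hzu Hzw Huw Hnuw Hp Ha.
case: p Hp Ha => [|x p] Hp Ha; first by move: Hp; rewrite /= (negbTE Hnuw).
set q := u :: rcons (x :: p) w.
have Hs : size q = (size p).+3 by rewrite /q /= size_rcons.
apply: (@noshort (size q) z q) => //.
have Hlast : nth z q (size q).-1 = w by rewrite Hs /q /= nth_rcons ltnn eqxx.
split.
- by rewrite Hs.
- move=> i Hi; move/(pathP z): Hp => Hp.
  have := Hp i; rewrite /q /=; apply; rewrite Hs /= in Hi; rewrite size_rcons /=; lia.
- by rewrite Hlast Hzu Hzw.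
- by rewrite Hlast /= Huw.
- move=> i Hi; rewrite Hs /= in Hi.
  case: i Hi => [|i] Hi; first by lia.
  have -> : nth z q i.+1 = nth z (rcons (x :: p) w) i by [].
  rewrite nth_rcons.
  have Hi' : i < (size p).+1 by lia.
  rewrite Hi'.
  move/(all_nthP z): Ha => Ha.
  by have /andP[-> ->] := Ha i Hi'.
Qed.


Definition simp (S : {set T}) x := forall u w, u \in S -> w \in S -> e x u -> e x w -> u != w -> e u w.

Lemma path_all_in (R : {set T}) (r : rel T) x p :
  (forall a b, r a b -> b \in R) -> path r x p -> all (mem R) p.
Proof.
move=> Hr; elim: p x => [|y p IH] x //= /andP[Hxy Hp].
by rewrite (Hr _ _ Hxy) (IH y Hp).
Qed.

Lemma simp_exists n : forall (S K : {set T}), #|S| <= n -> K \subset S -> is_clique e K ->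
  (exists x, x \in S /\ x \notin K) -> exists x, [/\ x \in S, x \notin K & simp S x].
Proof.
elim: n => [|n IH] S K Hn HKS HK [x0 [Hx0S Hx0K]].
  have : 0 < #|S| by apply/card_gt0P; exists x0.
  lia.
have [z [HzS HKz]] : exists z, z \in S /\ (forall k, k \in K -> k = z \/ e z k).
  case: (set_0Vmem K) => [-> | [k Hk]].
    by exists x0; split => // k; rewrite inE.
  exists k; split; first by apply: (subsetP HKS).
  move=> k' Hk'; case: (eqVneq k' k) => [->|Hne]; first by left.
  by right; apply: (HK k k') => //; rewrite eq_sym.
case: (classic (exists y, [/\ y \in S, y != z & ~~ e z y])).
  move=> [y [HyS Hyz Hnzy]].
  set R := [set a in S | (a != z) && ~~ e z a].
  set r := [rel a b | e a b && (a \in R) && (b \in R)].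
  set C := [set c in R | connect r y c].
  set NC := [set a in S | (a \notin C) && [exists c in C, e a c]].
  set S2 := C :|: NC.
  have HyR : y \in R by rewrite inE HyS Hyz Hnzy.
  have HyC : y \in C by rewrite inE HyR connect0.
  have HCR : forall c, c \in C -> c \in R by move=> c; rewrite inE => /andP[].
  have HRS : forall c, c \in R -> c \in S by move=> c; rewrite inE => /andP[].
  have HRz : forall c, c \in R -> (c != z) && ~~ e z c by move=> c; rewrite inE => /andP[].
  have HS2S : S2 \subset S.
    apply/subsetP => a; rewrite inE => /orP[/HCR/HRS //|]; by rewrite inE => /andP[].
  have HzS2 : z \notin S2.
    rewrite inE negb_or; apply/andP; split.
      by apply/negP => /HCR/HRz; rewrite eqxx.
    rewrite inE negb_and; apply/orP; right; rewrite negb_and; apply/orP; right.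
    apply/existsP => [[c /andP[Hc Hzc]]].
    by move: (HRz c (HCR c Hc)); rewrite Hzc andbF.
  have Hcard : #|S2| <= n.
    have : S2 \proper S by apply/properP; split => //; exists z.
    move/proper_card; lia.
  have HNC : forall a, a \in NC -> a \notin C /\ exists2 c, c \in C & e a c.
    move=> a; rewrite inE => /and3P[_ Ha /existsP[c /andP[Hc Hac]]].
    by split => //; exists c.
  have HNCz : forall a, a \in NC -> e z a.
    move=> a Ha; have [HaC [c Hc Hac]] := HNC a Ha.
    have HaS : a \in S by move: Ha; rewrite inE => /andP[].
    have HaR : a \notin R.
      apply/negP => HaR; move/negP: HaC; apply; rewrite inE HaR /=.
      apply: (connect_trans (y := c)); first by move: Hc; rewrite inE => /andP[].
      by apply: connect1; rewrite /= esym Hac HaR (HCR c Hc).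
    move: HaR; rewrite inE HaS /= negb_and => /orP[/negPn/eqP Haz|/negPn //].
    by move: (HRz c (HCR c Hc)); rewrite -Haz Hac andbF.
  have HNCcl : is_clique e NC.
    move=> a1 b1 Ha Hb Hab; case Heab: (e a1 b1) => //; exfalso.
    have [_ [ca Hca Haca]] := HNC a1 Ha.
    have [_ [cb Hcb Hbcb]] := HNC b1 Hb.
    have Hsym : connect_sym r.
      apply: sym_connect_sym => a' b' /=; by rewrite esym; case: (e b' a'); case: (a' \in R); case: (b' \in R).
    have Hcc : connect r ca cb.
      apply: (connect_trans (y := y)).
        by rewrite Hsym; move: Hca; rewrite inE => /andP[].
      by move: Hcb; rewrite inE => /andP[].
    case/connectP: Hcc => p Hp Hlast.
    apply: (@no_detour z a1 b1 (ca :: p)).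
    - exact: HNCz.
    - exact: HNCz.
    - exact: Hab.
    - by rewrite Heab.
    - rewrite rcons_cons /= Haca /= rcons_path -Hlast esym Hbcb andbT.
      apply: sub_path Hp => a' b' /= /andP[/andP[] //].
    - apply/allP => c; rewrite inE => /orP[/eqP -> | Hc].
        exact: HRz (HCR _ Hca).
      apply: HRz.
      have Hall : all (mem R) p.
        by apply: (path_all_in (r := r)) Hp => a' b' /= /andP[_ ->].
      by move/allP: Hall; apply.
  have HNCS2 : NC \subset S2 by apply/subsetP => a Ha; rewrite inE Ha orbT.
  have HyNC : y \notin NC by apply/negP => /HNC [H _]; rewrite HyC in H.
  have HyS2 : y \in S2 by rewrite /S2 in_setU HyC.
  have [x [HxS2 HxNC Hsx]] := IH S2 NC Hcard HNCS2 HNCcl (ex_intro _ y (conj HyS2 HyNC)).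
  have HxC : x \in C by move: HxS2; rewrite /S2 in_setU (negbTE HxNC) orbF.
  have /andP[Hxz Hnzx] := HRz x (HCR x HxC).
  exists x; split.
  - exact: HRS (HCR x HxC).
  - apply/negP => HxK; case: (HKz x HxK) => [Hxz'|Hzx].
      by move: Hxz; rewrite Hxz' eqxx.
    by move: Hnzx; rewrite Hzx.
  - move=> u w Hu Hw Hxu Hxw Huw.
    have Hin : forall a, a \in S -> e x a -> a \in S2.
      move=> a Ha Hxa; rewrite /S2 in_setU; case HaC: (a \in C) => //=.
      rewrite /NC inE Ha HaC /=; apply/existsP; exists x; by rewrite HxC esym.
    exact: Hsx (Hin u Hu Hxu) (Hin w Hw Hxw) Hxu Hxw Huw.
move=> Hall.
have HzN : forall y, y \in S -> y != z -> e z y.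
  move=> y Hy Hyz; apply/negPn/negP => Hnn; apply: Hall; by exists y.
case: (classic (exists x, x \in S :\ z /\ x \notin K :\ z)).
  move=> Hex.
  have Hcard : #|S :\ z| <= n.
    move: Hn; rewrite (cardsD1 z S) HzS; lia.
  have HKS' : K :\ z \subset S :\ z by apply: setSD.
  have HK' : is_clique e (K :\ z).
    move=> a b; rewrite !inE => /andP[_ Ha] /andP[_ Hb]; exact: HK.
  have [x [HxS HxK Hsx]] := IH _ _ Hcard HKS' HK' Hex.
  move: HxS; rewrite !inE => /andP[Hxz HxS].
  exists x; split => //.
    by move: HxK; rewrite !inE Hxz.
  move=> u w Hu Hw Hxu Hxw Huw.
  case: (eqVneq u z) => [Huz|Huz].
    by rewrite Huz; apply: HzN => //; rewrite -Huz eq_sym.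
  case: (eqVneq w z) => [Hwz|Hwz].
    by rewrite Hwz esym; apply: HzN.
  by apply: (Hsx u w) => //; rewrite !inE ?Huz ?Hwz.
move=> Hnex.
have Hx0z : x0 = z.
  apply/eqP/negPn/negP => Hne; apply: Hnex; exists x0; by rewrite !inE Hne Hx0S Hx0K.
exists z; split => //; first by rewrite -Hx0z.
move=> u w Hu Hw Hzu Hzw Huw.
have HinK : forall a, a \in S -> e z a -> a \in K.
  move=> a Ha Hza; apply/negPn/negP => HaK; apply: Hnex; exists a.
  have Haz : a != z by apply/eqP => Haz; move: Hza; rewrite Haz eirr.
  by rewrite !inE Haz Ha HaK.
exact: HK (HinK u Hu Hzu) (HinK w Hw Hzw) Huw.
Qed.


Definition peo_cond (s : seq T) := forall v u w, v \in s -> u \in s -> w \in s ->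
  e u v -> e w v -> index u s < index v s -> index w s < index v s -> u != w -> e u w.

Lemma index_rc (s : seq T) x y : y \in rcons s x ->
  index y (rcons s x) = if y \in s then index y s else size s.
Proof.
rewrite -cats1 index_cat mem_cat inE; case: ifP => // _ /= /eqP ->.
by rewrite eqxx addn0.
Qed.

Lemma peo_build (k : seq T) : uniq k -> is_clique e [set x in k] ->
  forall n (S : {set T}), #|S| <= n -> [set x in k] \subset S ->
  exists t, [/\ uniq (k ++ t), (forall x, (x \in k ++ t) = (x \in S)) & peo_cond (k ++ t)].
Proof.
move=> Hku HK.
have base : forall S : {set T}, [set x in k] \subset S -> ~ (exists x, x \in S /\ x \notin [set x in k]) ->
  exists t, [/\ uniq (k ++ t), (forall x, (x \in k ++ t) = (x \in S)) & peo_cond (k ++ t)].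
  move=> S HKS Hnex; exists [::]; rewrite cats0; split => //.
  - move=> x; apply/idP/idP => [Hx|Hx]; first by apply: (subsetP HKS); rewrite inE.
    by apply/negPn/negP => Hn'; apply: Hnex; exists x; rewrite inE.
  - move=> v u w _ Hu Hw _ _ _ _ Huw; apply: HK => //; by rewrite inE.
elim=> [|n IH] S Hn HKS; (case: (classic (exists x, x \in S /\ x \notin [set x in k])) => [Hex|Hnex]; last by apply: base).
  move: Hex => [x [Hx _]]; have : 0 < #|S| by apply/card_gt0P; exists x.
  lia.
have [x [HxS HxK Hsx]] := simp_exists Hn HKS HK Hex.
have Hcard : #|S :\ x| <= n by move: Hn; rewrite (cardsD1 x S) HxS; lia.
have HKS' : [set x in k] \subset S :\ x.
  apply/subsetP => y Hy; rewrite !inE (subsetP HKS y Hy) andbT.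
  by apply/eqP => Hyx; move: HxK; rewrite -Hyx Hy.
have [t [Hu Hm Hp]] := IH _ Hcard HKS'.
exists (rcons t x); rewrite -rcons_cat.
set s := k ++ t in Hu Hm Hp *.
have Hxs : x \notin s by rewrite Hm !inE eqxx.
split.
- by rewrite rcons_uniq Hxs.
- move=> y; rewrite mem_rcons inE Hm !inE.
  by case: (eqVneq y x) => [->|] //=.
- move=> v u w Hv Hu' Hw Huv Hwv Hiu Hiw Huw.
  have Hlt : forall y, y \in rcons s x -> index y (rcons s x) < index v (rcons s x) -> y \in s.
    move=> y Hy Hi; rewrite (index_rc Hy) in Hi; move: Hi; rewrite (index_rc Hv).
    case Hys: (y \in s) => //; case Hvs: (v \in s); last by rewrite ltnn.
    move=> Hi; have H := index_mem v s; rewrite Hvs in H.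
    by move: (ltn_trans H Hi); rewrite ltnn.
  have Hus := Hlt u Hu' Hiu; have Hws := Hlt w Hw Hiw.
  move: (Hv); rewrite mem_rcons inE => /orP[/eqP Hvx|Hvs].
    subst v; apply: (Hsx u w) => //; try by rewrite esym.
    + by move: Hus; rewrite Hm inE => /andP[].
    + by move: Hws; rewrite Hm inE => /andP[].
  apply: (Hp v u w) => //.
  + by move: Hiu; rewrite (index_rc Hu') (index_rc Hv) Hus Hvs.
  + by move: Hiw; rewrite (index_rc Hw) (index_rc Hv) Hws Hvs.
Qed.

End Ch.

Theorem theorem10 (T : finType) (e : rel T) :
  simple_graph e -> connected_graph e -> chordal e -> 2 <= #|T| ->
  forall v : T,
    (exists s : seq T, PEO e s /\ Fbranch_leaf e s v) <->
    (exists C : {set T}, dominating_clique_of e (nbhd e v) C).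
Proof.
move=> [esym eirr] Hcon Hch H2 v; split.
- move=> [s [[[Hu Hall] Hpeo] [Hv0 [w [Hw Hwu]]]]].
  have Hinj : forall x y, index x s = index y s -> x = y.
    by move=> x y H; rewrite -(nth_index x (Hall x)) H nth_index.
  case: (boolP [exists c, e v c && (index c s < index v s)]) => [/existsP [c0 /andP[Hvc0 Hic0]]|Hnex].
  + exists [set c | e v c && (index c s < index v s)]; split; [|split].
    * by apply/subsetP => c; rewrite !inE => /andP[].
    * move=> x y; rewrite !inE => /andP[Hvx Hix] /andP[Hvy Hiy] Hxy.
      by apply: (Hpeo v) => //; rewrite esym.
    * move=> x; rewrite /nbhd inE => Hvx.
      case Hxc: (e v x && (index x s < index v s)); first by left; rewrite inE Hxc.
      right.
      have Hxv : x != v by apply/eqP => Hxv; move: Hvx; rewrite Hxv eirr.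
      have Hivx : index v s < index x s.
        move: Hxc; rewrite Hvx /= => /negbT; rewrite -leqNgt leq_eqVlt => /orP[/eqP H|//].
        by move: Hxv; rewrite (Hinj _ _ H) eqxx.
      case: (arg_minnP (fun c => index c s) Hvc0) => m Hm Hmin.
      have Hmw : m = w.
        apply: Hwu; left; split => //; split => //.
      case: (boolP [exists y, e x y && (index y s < index v s)]) => [/existsP [y /andP[Hxy Hiy]]|Hnex].
        exists y => //; rewrite inE Hiy andbT esym.
        apply: (Hpeo x) => //; try by rewrite esym.
        - exact: (ltn_trans Hiy Hivx).
        - apply/eqP => Hyv; move: Hiy; by rewrite Hyv ltnn.
      exfalso.
      have Hxw : x = w.
        apply: Hwu; right; split; first by apply/eqP => H0; move: Hivx; rewrite H0.
        split; first by rewrite esym.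
        move=> y Hxy; rewrite leqNgt; apply/negP => Hiy.
        by move/existsP: Hnex; apply; exists y; rewrite Hxy Hiy.
      have := Hmin c0 Hvc0; rewrite /= Hmw -Hxw => H.
      have := leq_ltn_trans H Hic0; rewrite ltnNge => /negP; apply.
      exact: ltnW.
  + exists (nbhd e v); split; [by []|split]; last by move=> x Hx; left.
    have Hleaf : forall x, x \in nbhd e v -> x = w.
      move=> x; rewrite /nbhd inE => Hvx.
      have Hxv : x != v by apply/eqP => Hxv; move: Hvx; rewrite Hxv eirr.
      have Hivx : index v s < index x s.
        have : ~~ (e v x && (index x s < index v s)) by move/existsP: Hnex => H; apply/negP => H'; apply: H; exists x.
        rewrite Hvx /= -leqNgt leq_eqVlt => /orP[/eqP H|//].
        by move: Hxv; rewrite (Hinj _ _ H) eqxx.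
      apply: Hwu; right; split; first by apply/eqP => H0; move: Hivx; rewrite H0.
      split; first by rewrite esym.
      move=> y Hxy; rewrite leqNgt; apply/negP => Hiy.
      have Hvy : e v y.
        rewrite esym; apply: (Hpeo x) => //; try by rewrite esym.
        - exact: (ltn_trans Hiy Hivx).
        - apply/eqP => Hyv; move: Hiy; by rewrite Hyv ltnn.
      by move/existsP: Hnex; apply; exists y; rewrite Hvy Hiy.
    move=> x y Hx Hy Hxy; exfalso; move: Hxy.
    by rewrite (Hleaf x Hx) (Hleaf y Hy) eqxx.
- move=> [C [HCN [HCcl HCdom]]].
  have HCv : forall c, c \in C -> e v c.
    by move=> c Hc; have := subsetP HCN c Hc; rewrite /nbhd inE.
  have [yy Hyv] : exists y, y != v.
    have /card_gt1P [a [b [_ _ Hab]]] : 1 < #|T| by [].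
    case: (eqVneq a v) => [Hav|Hav]; last by exists a.
    by exists b; rewrite -Hav eq_sym.
  have [x1 Hvx1] : exists x1, e v x1.
    case/connectP: (Hcon v yy) => [[|x1 p]] /=; first by move=> _ Hy; move: Hyv; rewrite Hy eqxx.
    by move=> /andP[H _] _; exists x1.
  have [c0 Hc0] : exists c0, c0 \in C.
    case: (HCdom x1); first by rewrite /nbhd inE.
      by move=> H; exists x1.
    by move=> [c Hc _]; exists c.
  have HvC : v \notin C by apply/negP => /HCv; rewrite eirr.
  set k := rcons (enum C) v.
  have Hku : uniq k by rewrite rcons_uniq mem_enum HvC enum_uniq.
  have HkC : forall x, (x \in [set x in k]) = (x == v) || (x \in C).
    by move=> x; rewrite inE mem_rcons inE mem_enum.
  have HK : is_clique e [set x in k].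
    move=> a b; rewrite !HkC => /orP[/eqP ->|Ha] /orP[/eqP ->|Hb] Hab.
    - by move: Hab; rewrite eqxx.
    - exact: HCv.
    - by rewrite esym; apply: HCv.
    - exact: HCcl.
  have [t [Hsu Hsm Hsp]] := peo_build esym eirr Hch Hku HK (leqnn #|[set: T]|) (subsetT _).
  set s := k ++ t in Hsu Hsm Hsp.
  have Hall : forall x, x \in s by move=> x; rewrite Hsm inE.
  have Hinj : forall x y, index x s = index y s -> x = y.
    by move=> x y H; rewrite -(nth_index x (Hall x)) H nth_index.
  have Hs : s = enum C ++ v :: t by rewrite /s /k cat_rcons.
  have HiC : forall c, c \in C -> index c s < index v s.
    move=> c Hc; rewrite Hs !index_cat !mem_enum Hc (negbTE HvC) /= eqxx addn0 index_mem mem_enum.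
    exact: Hc.
  exists s; split.
    split; first by split.
    move=> v' u w Huv Hwv Hiu Hiw Huw.
    exact: (Hsp v' u w).
  split; first by apply/eqP => H0; move: (HiC c0 Hc0); rewrite H0.
  case: (arg_minnP (fun c => index c s) Hvx1) => m Hm Hmin.
  have Hlm : leftmost_nbr e s v m by split.
  exists m; split.
    by left; split => //; apply/eqP => H0; move: (HiC c0 Hc0); rewrite H0.
  move=> w' [[_ [Hvw' Hmin']]|[Hw'0 [Hw'v Hmin']]].
    apply: Hinj; apply/eqP; rewrite eqn_leq Hmin //=.
    by rewrite andbT; exact: Hmin' m Hm.
  exfalso.
  have [y' Hy'C Hw'y'] : exists2 y', y' \in C & e w' y'.
    case Hw'C: (w' \in C).
      case: (enum C) (mem_enum C) Hs => [|c1 r] HE Hs'.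
        by move: (HE c0); rewrite Hc0 in_nil.
      have Hc1 : c1 \in C by rewrite -HE inE eqxx.
      exists c1 => //; apply: HCcl => //.
      apply/eqP => Hwc; move: Hw'0; rewrite Hs' Hwc /= eqxx.
      done.
    case: (HCdom w'); first by rewrite /nbhd inE esym.
      by rewrite Hw'C.
    by move=> [y' Hy' Hw'y']; exists y'.
  have := Hmin' y' Hw'y'; rewrite leqNgt; move/negP; apply; exact: HiC.
Qed.
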